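(* Let $X\in\mathbb{R}^{m\times n}_+$, $W\in\mathbb{R}^{m\times r}$ and $H\in\mathbb{R}^{r\times n}_+$ be such that $X=WH$ satisfies the facet-based conditions (FBC) for some integer $s$. Then every facet of $\operatorname{conv}(W)$ is a facet of $\operatorname{conv}(X)$.
   Context: For a matrix $M$, $\operatorname{conv}(M)$ denotes the convex hull of its columns. A facet of a polytope is a face of dimension one less than the dimension of the polytope. The unit simplex is $\Delta^r=\{x\in\mathbb{R}^r: x\ge 0,\ \sum_i x_i=1\}$. Facet-based conditions (FBC) with parameter $s$ for $X=WH$, where $d=\operatorname{rank}(X)$: (a) no column of $W$ lies in the convex hull of the other columns of $W$ (so $\operatorname{conv}(W)$ is a polytope whose $r$ vertices are the columns of $W$); (b) $H(:,j)\in\Delta^r$ for all $j=1,\dots,n$; (c) each facet of $\operatorname{conv}(W)$ contains at least $s\ge d$ distinct columns of $X$, and among them at least $d-1$ generate that facet (i.e., the convex hull of these $s$ columns has dimension $d-2$); (d) every facet of $\operatorname{conv}(X)$ which is not a facet of $\operatorname{conv}(W)$ contains strictly fewer than $s$ distinct columns of $X$. *)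

(* Defs.v *)
From HB Require Import structures.
From mathcomp Require Import all_boot all_order all_algebra.
Set Implicit Arguments. Unset Strict Implicit. Unset Printing Implicit Defensive.
Import Order.TTheory GRing.Theory Num.Theory.
Local Open Scope ring_scope.

Section Polytopes.
Variable R : realFieldType.

Definition conv_sub m k (M : 'M[R]_(m, k)) (J : {set 'I_k}) (x : 'cV[R]_m) : Prop :=
  exists lam : 'cV[R]_k,
    [/\ forall i, 0 <= lam i 0,
        forall i, i \notin J -> lam i 0 = 0,
        \sum_i lam i 0 = 1
      & x = M *m lam].

Definition conv m k (M : 'M[R]_(m, k)) (x : 'cV[R]_m) : Prop := conv_sub M setT x.

Definition aff_indep m k (p : 'I_k.+1 -> 'cV[R]_m) : bool :=
  row_free (\matrix_(i < k) (p (lift ord0 i) - p ord0)^T).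

Definition aff_dim_ge m (S : 'cV[R]_m -> Prop) (k : nat) : Prop :=
  exists p : 'I_k.+1 -> 'cV[R]_m, (forall i, S (p i)) /\ aff_indep p.

(* S has (affine) dimension d; the empty set has dimension -1 *)
Definition has_dim m (S : 'cV[R]_m -> Prop) (d : int) : Prop :=
  match d with
  | Posz k => aff_dim_ge S k /\ ~ aff_dim_ge S k.+1
  | Negz 0 => forall x, ~ S x
  | _ => False
  end.

Definition is_face m k (M : 'M[R]_(m, k)) (F : 'cV[R]_m -> Prop) : Prop :=
  exists (a : 'cV[R]_m) (b : R),
    (forall x, conv M x -> (a^T *m x) 0 0 <= b) /\
    (forall x, F x <-> (conv M x /\ (a^T *m x) 0 0 = b)).

Definition is_facet m k (M : 'M[R]_(m, k)) (F : 'cV[R]_m -> Prop) : Prop :=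
  is_face M F /\ exists d : int, has_dim (conv M) d /\ has_dim F (d - 1).

Definition distinct_cols_in m n (X : 'M[R]_(m, n)) (J : {set 'I_n})
    (F : 'cV[R]_m -> Prop) : Prop :=
  {in J &, injective (fun j => col j X)} /\ (forall j, j \in J -> F (col j X)).

Definition FBC m n r (X : 'M[R]_(m, n)) (W : 'M[R]_(m, r)) (H : 'M[R]_(r, n))
    (s : nat) : Prop :=
  let d := \rank X in
  [/\ forall k : 'I_r, ~ conv_sub W [set~ k] (col k W),
      (forall i j, 0 <= H i j) /\ (forall j, \sum_i H i j = 1),
      (d <= s)%N /\
         (forall F, is_facet W F ->
            exists J : {set 'I_n}, [/\ (s <= #|J|)%N, distinct_cols_in X J F
                                     & has_dim (conv_sub X J) (d%:Z - 2)])
    & forall G, is_facet X G -> ~ is_facet W G ->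
        forall J : {set 'I_n}, distinct_cols_in X J G -> (#|J| < s)%N].

End Polytopes.

(* Main.v *)
Require Import Defs.
From HB Require Import structures.
From mathcomp Require Import all_boot all_order all_algebra.
From mathcomp Require Import lra zify.
From Stdlib Require Import Classical.
Import Order.TTheory GRing.Theory Num.Theory.
Local Open Scope ring_scope.

Set Implicit Arguments. Unset Strict Implicit. Unset Printing Implicit Defensive.

Section Basics.
Variable R : realFieldType.
Variable m : nat.
Implicit Types (a c x y : 'cV[R]_m).

Definition dot a x : R := (a^T *m x) 0 0.

Lemma dotE a x : dot a x = \sum_i a i 0 * x i 0.
Proof. by rewrite /dot !mxE; apply: eq_bigr => i _; rewrite mxE. Qed.
Lemma dotDr a x y : dot a (x + y) = dot a x + dot a y.
Proof. by rewrite /dot mulmxDr mxE. Qed.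
Lemma dotNr a x : dot a (- x) = - dot a x.
Proof. by rewrite /dot mulmxN mxE. Qed.
Lemma dotBr a x y : dot a (x - y) = dot a x - dot a y.
Proof. by rewrite dotDr dotNr. Qed.
Lemma dotZr a r x : dot a (r *: x) = r * dot a x.
Proof. by rewrite /dot -scalemxAr mxE. Qed.
Lemma dotDl a c x : dot (a + c) x = dot a x + dot c x.
Proof. by rewrite /dot linearD /= mulmxDl mxE. Qed.
Lemma dotZl a r x : dot (r *: a) x = r * dot a x.
Proof. by rewrite /dot linearZ /= -scalemxAl mxE. Qed.
Lemma dotNl a x : dot (- a) x = - dot a x.
Proof. by rewrite /dot linearN /= mulNmx mxE. Qed.
Lemma dot0l x : dot 0 x = 0.
Proof. by rewrite /dot linear0 mul0mx mxE. Qed.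
Lemma dot_sumr (I : finType) a (f : I -> 'cV[R]_m) :
  dot a (\sum_i f i) = \sum_i dot a (f i).
Proof. by rewrite /dot mulmx_sumr summxE. Qed.
Lemma dot_tr a x : (x^T *m a) 0 0 = dot a x.
Proof. by rewrite /dot !mxE; apply: eq_bigr => i _; rewrite !mxE mulrC. Qed.

Lemma mul_sum_col N (M : 'M[R]_(m, N)) (lam : 'cV[R]_N) :
  M *m lam = \sum_j lam j 0 *: col j M.
Proof.
apply/matrixP => i k; rewrite (ord1 k) !mxE summxE.
by apply: eq_bigr => j _; rewrite !mxE mulrC.
Qed.

Lemma dot_conv N (M : 'M[R]_(m, N)) a lam :
  dot a (M *m lam) = \sum_j lam j 0 * dot a (col j M).
Proof. by rewrite mul_sum_col dot_sumr; apply: eq_bigr => j _; rewrite dotZr. Qed.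

Definition valid N (M : 'M[R]_(m, N)) a (b : R) := forall j, dot a (col j M) <= b.
Definition Fc N (M : 'M[R]_(m, N)) a (b : R) := fun x => conv M x /\ dot a x = b.

Lemma conv_le N (M : 'M[R]_(m, N)) a b x : valid M a b -> conv M x -> dot a x <= b.
Proof.
move=> hv [lam [h0 _ h1 ->]]; rewrite dot_conv.
apply: (@le_trans _ _ (\sum_j lam j 0 * b)).
  by apply: ler_sum => j _; apply: ler_wpM2l.
by rewrite -big_distrl /= h1 mul1r.
Qed.

Lemma face_mono N (M : 'M[R]_(m, N)) a b c g x :
  valid M a b -> (forall j, dot a (col j M) = b -> dot c (col j M) = g) ->
  conv M x -> dot a x = b -> dot c x = g.
Proof.
move=> hv ht [lam [h0 _ h1 ->]]; rewrite !dot_conv => hx.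
have hz : forall j, lam j 0 * (b - dot a (col j M)) = 0.
  move=> j; apply: (@psumr_eq0P _ _ predT (fun j => lam j 0 * (b - dot a (col j M)))) => //.
    by move=> i _; apply: mulr_ge0 => //; rewrite subr_ge0.
  under eq_bigr do rewrite mulrBr.
  by rewrite sumrB -big_distrl /= h1 mul1r hx subrr.
rewrite (eq_bigr (fun j => lam j 0 * g)); first by rewrite -big_distrl /= h1 mul1r.
move=> j _; have := hz j; have [->|hl] := eqVneq (lam j 0) 0.
  by rewrite !mul0r.
by move/eqP; rewrite mulf_eq0 (negbTE hl) /= subr_eq0 => /eqP/esym/ht ->.
Qed.

Lemma conv_col N (M : 'M[R]_(m, N)) j : conv M (col j M).
Proof.
exists (delta_mx j 0); split.
- by move=> i; rewrite mxE ler0n.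
- by move=> i; rewrite in_setT.
- by rewrite (bigD1 j) //= mxE !eqxx big1 ?addr0 // => i /negbTE hi; rewrite mxE hi.
- by rewrite colE.
Qed.

Lemma const_conv N (M : 'M[R]_(m, N)) c g x :
  (forall j, dot c (col j M) = g) -> conv M x -> dot c x = g.
Proof.
move=> h hx; apply: (@face_mono _ M 0 0) => //.
- by move=> j; rewrite dot0l.
- by rewrite dot0l.
Qed.

End Basics.

Section Aff.
Variable R : realFieldType.
Variable m : nat.
Local Notation V := 'cV[R]_m.

Definition Dm k (p : 'I_k.+1 -> V) : 'M[R]_(k, m) :=
  \matrix_(i < k) (p (lift ord0 i) - p ord0)^T.

Lemma aff_indepE k (p : 'I_k.+1 -> V) : aff_indep p = row_free (Dm p).
Proof. by []. Qed.

Definition in_aff k (p : 'I_k.+1 -> V) (x : V) := ((x - p ord0)^T <= Dm p)%MS.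

Lemma Dm_mul k (p : 'I_k.+1 -> V) c i :
  (Dm p *m c) i 0 = dot c (p (lift ord0 i)) - dot c (p ord0).
Proof.
rewrite -dotBr -dot_tr mxE [in RHS]mxE; apply: eq_bigr => l _.
by rewrite !mxE.
Qed.

Lemma in_aff_dot k (p : 'I_k.+1 -> V) x c g :
  in_aff p x -> (forall i, dot c (p i) = g) -> dot c x = g.
Proof.
move=> /submxP [z hz] hc.
have h0 : Dm p *m c = 0.
  by apply/matrixP => i j; rewrite (ord1 j) Dm_mul !hc subrr mxE.
have : dot c (x - p ord0) = 0 by rewrite -dot_tr hz -mulmxA h0 mulmx0 mxE.
by rewrite dotBr hc => /eqP; rewrite subr_eq0 => /eqP.
Qed.

Lemma in_aff_sep k (p : 'I_k.+1 -> V) x c g :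
  (forall i, dot c (p i) = g) -> dot c x <> g -> ~ in_aff p x.
Proof. by move=> hc hx hin; apply: hx; apply: in_aff_dot hin hc. Qed.

Definition ext k (p : 'I_k.+1 -> V) (x : V) : 'I_k.+2 -> V :=
  fun i => if (i < k.+1)%N then p (inord i) else x.

Lemma ext0 k (p : 'I_k.+1 -> V) x : ext p x ord0 = p ord0.
Proof. by rewrite /ext /=; congr p; apply: val_inj; rewrite /= inordK. Qed.

Lemma ext_widen k (p : 'I_k.+1 -> V) x (i : 'I_k.+1) :
  ext p x (widen_ord (leqnSn _) i) = p i.
Proof. by rewrite /ext /= ltn_ord; congr p; apply: val_inj; rewrite /= inordK. Qed.

Lemma ext_max k (p : 'I_k.+1 -> V) x : ext p x ord_max = x.
Proof. by rewrite /ext /= ltnn. Qed.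

Lemma ext_lift k (p : 'I_k.+1 -> V) x (i : 'I_k) :
  ext p x (lift ord0 (widen_ord (leqnSn _) i)) = p (lift ord0 i).
Proof.
rewrite /ext.
have -> : (lift ord0 (widen_ord (leqnSn k) i) : nat) = i.+1 by [].
rewrite ltnS ltn_ord; congr p; apply: val_inj.
by rewrite /= inordK // ltnS.
Qed.

Lemma ext_lift_max k (p : 'I_k.+1 -> V) x :
  ext p x (lift ord0 (@ord_max k)) = x.
Proof.
rewrite /ext; have -> : (lift ord0 (@ord_max k) : nat) = k.+1 by [].
by rewrite ltnn.
Qed.

Lemma ext_in (S : V -> Prop) k (p : 'I_k.+1 -> V) x :
  (forall i, S (p i)) -> S x -> forall i, S (ext p x i).
Proof. by move=> hp hx i; rewrite /ext; case: ifP. Qed.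

Lemma aff_ext k (p : 'I_k.+1 -> V) x :
  aff_indep p -> ~ in_aff p x -> aff_indep (ext p x).
Proof.
rewrite !aff_indepE => hf hx; apply: inj_row_free => z hz.
move: hz; rewrite mulmx_sum_row big_ord_recr /=.
rewrite rowK ext_lift_max ext0.
under eq_bigr do rewrite rowK ext_lift ext0.
set z' : 'rV[R]_k := \row_i z 0 (widen_ord (leqnSn _) i).
have hs : \sum_(i < k) z 0 (widen_ord (leqnSn k) i) *: (p (lift ord0 i) - p ord0)^T
          = z' *m Dm p.
  by rewrite mulmx_sum_row; apply: eq_bigr => i _; rewrite rowK mxE.
rewrite hs => hz.
have [hl|hl] := eqVneq (z 0 ord_max) 0.
  move: hz; rewrite hl scale0r addr0 => /eqP; rewrite mulmx_free_eq0 // => /eqP hz'.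
  apply/rowP => i; rewrite [RHS]mxE.
  have [hi|hi] := ltnP i k.
    have -> : i = widen_ord (leqnSn k) (Ordinal hi) by apply: val_inj.
    by have := congr1 (fun w : 'rV[R]_k => w 0 (Ordinal hi)) hz'; rewrite !mxE.
  have -> : i = ord_max by apply: val_inj => /=; apply/eqP; rewrite eqn_leq hi -ltnS ltn_ord.
  by rewrite hl.
exfalso; apply: hx; apply/submxP; exists (- (z 0 ord_max)^-1 *: z').
have hv : z 0 ord_max *: (x - p ord0)^T = - (z' *m Dm p).
  by apply/eqP; rewrite -addr_eq0 addrC hz.
rewrite -[(x - p ord0)^T]scale1r -(mulVf hl) -scalerA hv.
by rewrite scaleNr mulNmx -scalemxAl scalerN.
Qed.

Lemma aff_bound j k (q : 'I_j.+1 -> V) (p : 'I_k.+1 -> V) :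
  (forall i, in_aff p (q i)) -> aff_indep q -> (j <= k)%N.
Proof.
move=> hq; rewrite aff_indepE /row_free => /eqP hr.
have hs : (Dm q <= Dm p)%MS.
  apply/row_subP => i; rewrite rowK.
  have -> : q (lift ord0 i) - q ord0 = (q (lift ord0 i) - p ord0) - (q ord0 - p ord0).
    by rewrite opprB addrA subrK.
  rewrite linearB /=; apply: addmx_sub; first exact: hq.
  by rewrite -scaleN1r; apply: scalemx_sub; exact: hq.
have := mxrankS hs; rewrite hr => h; apply: leq_trans h _; exact: rank_leq_row.
Qed.

Lemma dep (S : V -> Prop) k (p : 'I_k.+1 -> V) x :
  aff_indep p -> (forall i, S (p i)) -> ~ aff_dim_ge S k.+1 -> S x -> in_aff p x.
Proof.
move=> hp hS hn hx; apply: NNPP => hnx; apply: hn.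
exists (ext p x); split; [exact: ext_in | exact: aff_ext].
Qed.

Lemma aff_dim_ge_set (S T : V -> Prop) k :
  (forall x, S x -> T x) -> aff_dim_ge S k -> aff_dim_ge T k.
Proof. by move=> h [p [hp hi]]; exists p; split => // i; apply: h. Qed.

Lemma aff_dim_ge0 (S : V -> Prop) x : S x -> aff_dim_ge S 0.
Proof.
move=> hx; exists (fun _ => x); split => //.
by rewrite aff_indepE; apply: inj_row_free => v _; apply/rowP => -[].
Qed.

Lemma aff_dim_ge0_ex (S : V -> Prop) k : aff_dim_ge S k -> exists x, S x.
Proof. by case=> p [hp _]; exists (p ord0). Qed.

Lemma aff_dim_geS (S : V -> Prop) k : aff_dim_ge S k.+1 -> aff_dim_ge S k.
Proof.
case=> p [hp hi].
exists (fun i => p (widen_ord (leqnSn _) i)); split => //.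
rewrite aff_indepE; apply: inj_row_free => z hz.
set z0 : 'rV[R]_k.+1 := \row_i (if @insub _ (fun n => (n < k)%N) 'I_k (i : nat) is Some j then z 0 j else 0).
have hw : forall i : 'I_k, z0 0 (widen_ord (leqnSn _) i) = z 0 i.
  by move=> i; rewrite mxE /= (valK i).
have : z0 *m Dm p = 0.
  rewrite mulmx_sum_row big_ord_recr /= mxE insubN ?ltnn // scale0r addr0.
  rewrite -[RHS]hz mulmx_sum_row; apply: eq_bigr => i _.
  rewrite !rowK hw; congr (_ *: _).
  by congr (_ - _)^T; congr p; apply: val_inj.
move/eqP; rewrite mulmx_free_eq0 // => /eqP h0.
apply/rowP => i; have := congr1 (fun w : 'rV[R]_k.+1 => w 0 (widen_ord (leqnSn _) i)) h0.
by rewrite hw !mxE.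
Qed.

Lemma aff_dim_ge_le (S : V -> Prop) i j : (i <= j)%N -> aff_dim_ge S j -> aff_dim_ge S i.
Proof.
move=> hij; elim: j hij => [|j ih] hij h.
  by move: hij; rewrite leqn0 => /eqP ->.
move: hij; rewrite leq_eqVlt => /orP [/eqP -> //|]; rewrite ltnS => hij.
by apply: ih => //; apply: aff_dim_geS.
Qed.

Lemma aff_dim_ge_bound (S : V -> Prop) k : aff_dim_ge S k -> (k <= m)%N.
Proof.
case=> p [_]; rewrite aff_indepE /row_free => /eqP <-; exact: rank_leq_col.
Qed.

Lemma dim_exists (S : V -> Prop) :
  aff_dim_ge S 0 -> exists t, aff_dim_ge S t /\ ~ aff_dim_ge S t.+1.
Proof.
move=> h0.
suff : forall N, ~ aff_dim_ge S N -> exists t, aff_dim_ge S t /\ ~ aff_dim_ge S t.+1.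
  move=> H; apply: (H m.+1) => /aff_dim_ge_bound; by rewrite ltnn.
elim => [//|N ih] hN.
case: (classic (aff_dim_ge S N)) => hN'; first by exists N.
exact: ih.
Qed.

Lemma has_dim_uniq (S : V -> Prop) d1 d2 : has_dim S d1 -> has_dim S d2 -> d1 = d2.
Proof.
have key : forall t1 t2, aff_dim_ge S t1 -> ~ aff_dim_ge S t2.+1 -> (t1 <= t2)%N.
  move=> t1 t2 h1 h2; rewrite leqNgt; apply/negP => hlt; apply: h2.
  exact: aff_dim_ge_le hlt h1.
case: d1 => [t1|[|n1]] //; case: d2 => [t2|[|n2]] //.
- move=> [h1 h1'] [h2 h2']; congr Posz; apply/eqP; rewrite eqn_leq.
  by rewrite (key _ _ h1 h2') (key _ _ h2 h1').
- move=> [h1 _] h2; case: (aff_dim_ge0_ex h1) => x /h2 [].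
- move=> h1 [h2 _]; case: (aff_dim_ge0_ex h2) => x /h1 [].
Qed.

Lemma has_dim_ext (S T : V -> Prop) d : (forall x, S x <-> T x) -> has_dim S d -> has_dim T d.
Proof.
move=> h; case: d => [t|[|n]] //=.
- move=> [h1 h2]; split; first by apply: aff_dim_ge_set h1 => x /h.
  by move=> h3; apply: h2; apply: aff_dim_ge_set h3 => x /h.
- by move=> h1 x /h /h1.
Qed.

End Aff.

Section Wrap.
Variable R : realFieldType.
Variable m : nat.
Local Notation V := 'cV[R]_m.

Lemma facet_dims N (M : 'M[R]_(m, N)) F : is_facet M F ->
  exists e : nat, has_dim (conv M) e /\
   ((e = 0%N /\ forall x, ~ F x) \/
    exists e', e = e'.+1 /\ aff_dim_ge F e' /\ ~ aff_dim_ge F e'.+1).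
Proof.
case=> _ [[e|[|n]] [h1 h2]] //.
- exists e; split => //; case: e h1 h2 => [|e'] h1 h2; first by left.
  right; exists e'; split => //.
  by move: h2; rewrite (_ : e'.+1%:Z - 1 = e'%:Z) // -addn1 PoszD addrK.
Qed.

Lemma mk_facet N (M : 'M[R]_(m, N)) F e :
  is_face M F -> has_dim (conv M) (Posz e.+1) -> aff_dim_ge F e -> ~ aff_dim_ge F e.+1 ->
  is_facet M F.
Proof.
move=> hf hd h1 h2; split => //; exists (Posz e.+1); split => //.
by rewrite (_ : e.+1%:Z - 1 = e%:Z) // -addn1 PoszD addrK.
Qed.

Lemma Fc_face N (M : 'M[R]_(m, N)) a b : valid M a b -> is_face M (Fc M a b).
Proof. by move=> hv; exists a, b; split => // x hx; exact: conv_le hv hx. Qed.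

Lemma proper_bound N (M : 'M[R]_(m, N)) a b e j0 :
  valid M a b -> dot a (col j0 M) < b -> ~ aff_dim_ge (conv M) e.+1 ->
  ~ aff_dim_ge (Fc M a b) e.
Proof.
move=> hv hj hn [p [hp hi]].
have hpc : forall i, conv M (p i) by move=> i; case: (hp i).
have := dep hi hpc hn (conv_col M j0).
move/in_aff_dot => /(_ a b (fun i => (hp i).2)) h.
by move: hj; rewrite h ltxx.
Qed.

Lemma wrap_step N (M : 'M[R]_(m, N)) a b c g j0 :
  valid M a b -> dot a (col j0 M) < b ->
  (forall j, dot a (col j M) = b -> dot c (col j M) = g) ->
  (forall r k, exists j, dot (c + r *: a) (col j M) != k) ->
  exists cp bp cm bm jp jm,
  [/\ valid M cp bp /\ valid M cm bm,
      (forall j, dot a (col j M) = b -> dot cp (col j M) = bp /\ dot cm (col j M) = bm),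
      [/\ dot a (col jp M) < b, dot cp (col jp M) = bp & dot cm (col jp M) < bm],
      [/\ dot a (col jm M) < b, dot cm (col jm M) = bm & dot cp (col jm M) < bp]
    & forall q, dot a q < b -> dot cp q <> bp \/ dot cm q <> bm].
Proof.
move=> hv hj0 htc hnc.
pose slack := fun j => dot a (col j M) < b.
pose ratio := fun q : V => (dot c q - g) / (b - dot a q).
have hr : forall q, dot a q < b -> dot c q - g = ratio q * (b - dot a q).
  by move=> q hq; rewrite /ratio divfK // subr_eq0 gt_eqF.
have hs0 : slack j0 by [].
case: (@arg_maxP _ _ _ j0 slack (fun j => ratio (col j M)) hs0) => jp hjp hmax.
case: (@arg_minP _ _ _ j0 slack (fun j => ratio (col j M)) hs0) => jm hjm hmin.
set rp := ratio (col jp M) in hmax *; set rm := ratio (col jm M) in hmin *.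
have {}hmax : forall j, slack j -> ratio (col j M) <= rp by move=> j /hmax.
have {}hmin : forall j, slack j -> rm <= ratio (col j M) by move=> j /hmin.
have hcp : forall x, dot (c + rp *: a) x = dot c x + rp * dot a x.
  by move=> x; rewrite dotDl dotZl.
have hcm : forall x, dot (- (c + rm *: a)) x = - (dot c x + rm * dot a x).
  by move=> x; rewrite dotNl dotDl dotZl.
have hle : rm <= rp by apply: le_trans (hmin jp hjp) _.
have hne : rm != rp.
  apply/negP => /eqP he; case: (hnc rp (g + rp * b)) => j /negP; apply.
  rewrite hcp; have := hv j; rewrite le_eqVlt => /orP [/eqP ht|hs].
    by rewrite ht (htc _ ht).
  have h1 := hmin j hs; have h2 := hmax j hs.
  have : ratio (col j M) = rp by apply/eqP; rewrite eq_le h2 -he h1.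
  move=> hrat; have := hr _ hs; rewrite hrat => h; apply/eqP; lra.
have hlt : rm < rp by rewrite lt_neqAle hne hle.
exists (c + rp *: a), (g + rp * b), (- (c + rm *: a)), (- (g + rm * b)), jp, jm.
split; first split.
- move=> j; rewrite hcp; have := hv j; rewrite le_eqVlt => /orP [/eqP ht|hs].
    by rewrite ht (htc _ ht).
  have := hmax j hs; have := hr _ hs; set d := b - _ => h1 h2.
  have hd : 0 < d by rewrite /d subr_gt0.
  have : ratio (col j M) * d <= rp * d by rewrite ler_pM2r.
  rewrite /d in h1 hd *; nra.
- move=> j; rewrite hcm; have := hv j; rewrite le_eqVlt => /orP [/eqP ht|hs].
    by rewrite ht (htc _ ht).
  have := hmin j hs; have := hr _ hs; set d := b - _ => h1 h2.
  have hd : 0 < d by rewrite /d subr_gt0.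
  have : rm * d <= ratio (col j M) * d by rewrite ler_pM2r.
  rewrite /d in h1 hd *; nra.
- by move=> j ht; rewrite hcp hcm ht (htc _ ht).
- split => //.
  + by rewrite hcp; have := hr _ hjp; rewrite -/rp => h; lra.
  + rewrite hcm; have := hr _ hjp; rewrite -/rp; set d := b - _ => h.
    have hd : 0 < d by rewrite /d subr_gt0.
    have : rm * d < rp * d by rewrite ltr_pM2r.
    rewrite /d in h hd *; nra.
- split => //.
  + by rewrite hcm; have := hr _ hjm; rewrite -/rm => h; lra.
  + rewrite hcp; have := hr _ hjm; rewrite -/rm; set d := b - _ => h.
    have hd : 0 < d by rewrite /d subr_gt0.
    have : rm * d < rp * d by rewrite ltr_pM2r.
    rewrite /d in h hd *; nra.
- move=> q hq; apply: NNPP => /not_or_and [/NNPP h1 /NNPP h2].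
  move: h1 h2; rewrite hcp hcm => h1 h2.
  have hd : 0 < b - dot a q by rewrite subr_gt0.
  have : (rp - rm) * (b - dot a q) = 0 by lra.
  move/eqP; rewrite mulf_eq0 subr_eq0 (gt_eqF hd) orbF => /eqP he.
  by move: hne; rewrite he eqxx.
Qed.

End Wrap.

Section Iter.
Variable R : realFieldType.
Variable m : nat.
Local Notation V := 'cV[R]_m.

Lemma make_c N (M : 'M[R]_(m, N)) a b j0 e t (p : 'I_t.+1 -> V) :
  valid M a b -> dot a (col j0 M) < b ->
  aff_dim_ge (conv M) e -> (t.+2 <= e)%N ->
  (forall i, Fc M a b (p i)) -> aff_indep p -> ~ aff_dim_ge (Fc M a b) t.+1 ->
  exists c g, (forall j, dot a (col j M) = b -> dot c (col j M) = g) /\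
              (forall r k, exists j, dot (c + r *: a) (col j M) != k).
Proof.
move=> hva hj0 hde hte hp hi hn.
set u := col j0 M.
have hpa : forall i, dot a (p i) = b by move=> i; case: (hp i).
have hpu : aff_indep (ext p u).
  by apply: aff_ext hi _; apply: (in_aff_sep hpa); move=> h; move: hj0; rewrite -/u h ltxx.
have hcpu : forall i, conv M (ext p u i).
  by apply: ext_in; [move=> i; case: (hp i) | exact: conv_col].
have [v [hv hnv]] : exists v, conv M v /\ ~ in_aff (ext p u) v.
  apply: NNPP => hnex.
  have [q [hq hqi]] := aff_dim_ge_le hte hde.
  have hall : forall i, in_aff (ext p u) (q i).
    by move=> i; apply: NNPP => hni; apply: hnex; exists (q i).
  by have := aff_bound hall hqi; rewrite ltnn.
set P3 := ext (ext p u) v.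
have hP3 : aff_indep P3 by apply: aff_ext.
rewrite aff_indepE in hP3; case/row_freeP: hP3 => B hB.
set c := B *m (delta_mx (@ord_max t.+1) (0 : 'I_1)).
have hDc : forall i, dot c (P3 (lift ord0 i)) - dot c (P3 ord0) = (i == ord_max)%:R.
  move=> i; rewrite -Dm_mul /c mulmxA hB mul1mx mxE eqxx andbT //.
have hP30 : P3 ord0 = p ord0 by rewrite /P3 !ext0.
set g := dot c (p ord0).
have hcp : forall i, dot c (p i) = g.
  move=> i; case: (unliftP ord0 i) => [i'|] -> //.
  have := hDc (widen_ord (leqnSn _) (widen_ord (leqnSn _) i')).
  rewrite /P3 ext_lift ext_lift ext0 ext0.
  have -> : (widen_ord (leqnSn t.+1) (widen_ord (leqnSn t) i') == ord_max) = false.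
    by apply/negbTE; rewrite -val_eqE /= neq_ltn (ltn_trans (ltn_ord i')).
  by move/eqP; rewrite subr_eq0 => /eqP.
have hcu : dot c u = g.
  have := hDc (widen_ord (leqnSn _) (@ord_max t)).
  rewrite /P3 ext_lift ext_lift_max ext0 ext0.
  have -> : (widen_ord (leqnSn t.+1) (@ord_max t) == ord_max) = false.
    by apply/negbTE; rewrite -val_eqE /= neq_ltn ltnSn.
  by move/eqP; rewrite subr_eq0 => /eqP.
have hcv : dot c v = g + 1.
  have := hDc ord_max; rewrite /P3 ext_lift_max ext0 ext0 eqxx => h.
  have h' : dot c v - g = 1 by exact: h.
  by lra.
exists c, g; split.
  move=> j hj; have hin : in_aff p (col j M).
    by apply: (dep (S := Fc M a b)) => //; split => //; exact: conv_col.
  exact: in_aff_dot hin hcp.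
move=> r k; apply: NNPP => hnex.
have hall : forall j, dot (c + r *: a) (col j M) = k.
  by move=> j; apply/eqP; apply: NNPP => hj; apply: hnex; exists j; apply/negP.
have hk := const_conv hall.
have h0 := hk _ (hcpu ord0); rewrite ext0 dotDl dotZl hcp hpa in h0.
have h1 := hk _ (conv_col M j0); rewrite -/u dotDl dotZl hcu in h1.
have h2 := hk _ hv; rewrite dotDl dotZl hcv in h2.
have hr : r * (b - dot a u) = 0 by lra.
move/eqP: hr; rewrite mulf_eq0 subr_eq0 => /orP [/eqP hr0|/eqP hb].
  by move: h0 h2; rewrite hr0 !mul0r !addr0 => -> /eqP; rewrite -subr_eq0 addrC addKr oner_eq0.
by move: hj0; rewrite -/u -hb ltxx.
Qed.


Lemma iter_step N (M : 'M[R]_(m, N)) e a b j0 t q :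
  aff_dim_ge (conv M) e.+1 ->
  valid M a b -> dot a (col j0 M) < b -> aff_dim_ge (Fc M a b) t ->
  ~ aff_dim_ge (Fc M a b) t.+1 -> (t < e)%N -> conv M q -> dot a q < b ->
  exists c g j1, [/\ valid M c g, dot c (col j1 M) < g,
     (forall j, dot a (col j M) = b -> dot c (col j M) = g), dot c q < g
   & aff_dim_ge (Fc M c g) t.+1].
Proof.
move=> hd hv hj0 [p [hp hi]] hn hte hq hqa.
have [c [g [htc hnc]]] := make_c hv hj0 hd hte hp hi hn.
have [cp [bp [cm [bm [jp [jm [[hvp hvm] ht [hjpa hjpp hjpm] [hjma hjmm hjmp] hqq]]]]]]] :=
  wrap_step hv hj0 htc hnc.
have hpa : forall i, dot a (p i) = b by move=> i; case: (hp i).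
have mk : forall c' g' j', valid M c' g' ->
    (forall j, dot a (col j M) = b -> dot c' (col j M) = g') ->
    dot c' (col j' M) = g' -> dot a (col j' M) < b ->
    aff_dim_ge (Fc M c' g') t.+1.
  move=> c' g' j' hv' ht' hj' hja; exists (ext p (col j' M)); split.
    apply: ext_in; last by split => //; exact: conv_col.
    move=> i; case: (hp i) => hpc hpe; split => //.
    exact: (face_mono hv ht').
  apply: aff_ext hi _; apply: (in_aff_sep hpa) => h; move: hja; by rewrite h ltxx.
case: (hqq _ hqa) => hqn.
  exists cp, bp, jm; split => //.
  - by move=> j /ht [].
  - by rewrite lt_neqAle (conv_le hvp hq) andbT; apply/eqP.
  - apply: (mk _ _ jp) => //; by move=> j /ht [].
exists cm, bm, jp; split => //.
- by move=> j /ht [].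
- by rewrite lt_neqAle (conv_le hvm hq) andbT; apply/eqP.
- apply: (mk _ _ jm) => //; by move=> j /ht [].
Qed.

Lemma wrap_iter N (M : 'M[R]_(m, N)) e :
  aff_dim_ge (conv M) e.+1 -> ~ aff_dim_ge (conv M) e.+2 ->
  forall a b j0 t q, valid M a b -> dot a (col j0 M) < b ->
  aff_dim_ge (Fc M a b) t -> conv M q -> dot a q < b ->
  exists c g, [/\ valid M c g, (forall j, dot a (col j M) = b -> dot c (col j M) = g),
                  dot c q < g & is_facet M (Fc M c g)].
Proof.
move=> hd hnd.
suff : forall n a b j0 t q, (e - t <= n)%N -> valid M a b -> dot a (col j0 M) < b ->
  aff_dim_ge (Fc M a b) t -> conv M q -> dot a q < b ->
  exists c g, [/\ valid M c g, (forall j, dot a (col j M) = b -> dot c (col j M) = g),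
                  dot c q < g & is_facet M (Fc M c g)].
  by move=> H a b j0 t q; apply: (H (e - t)%N).
elim => [|n ih] a b j0 t q hn hv hj0 ht hq hqa.
all: have [t' [ht' hnt']] := dim_exists (aff_dim_ge_le (leq0n t) ht).
all: have htt' : (t <= t')%N by rewrite leqNgt; apply/negP => hlt; apply: hnt'; exact: aff_dim_ge_le hlt ht.
all: have hte : (t' <= e)%N by rewrite leqNgt; apply/negP => hlt; apply: (proper_bound hv hj0 hnd); exact: aff_dim_ge_le hlt ht'.
all: case: (ltnP t' e) => hlt.
- by move: hn; rewrite leqn0 subn_eq0 => hn; move: (leq_trans hn htt'); rewrite leqNgt hlt.
- have et : t' = e by apply/eqP; rewrite eqn_leq hte hlt.
  rewrite et in ht' hnt'.
  exists a, b; split => //.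
  by apply: (mk_facet (e := e)); [exact: Fc_face | split | exact: ht' | exact: hnt'].
- have [c [g [j1 [hvc hj1 htc hqc hdc]]]] := iter_step hd hv hj0 ht' hnt' hlt hq hqa.
  have hm : (e - t'.+1 <= n)%N by lia.
  have [c' [g' [hv' ht'' hq' hf]]] := ih c g j1 t'.+1 q hm hvc hj1 hdc hq hqc.
  exists c', g'; split => //.
  by move=> j /htc /ht''.
- have et : t' = e by apply/eqP; rewrite eqn_leq hte hlt.
  rewrite et in ht' hnt'.
  exists a, b; split => //.
  by apply: (mk_facet (e := e)); [exact: Fc_face | split | exact: ht' | exact: hnt'].
Qed.

End Iter.

Section Misc.
Variable R : realFieldType.
Variable m : nat.
Local Notation V := 'cV[R]_m.

Lemma nat_dim_uniq (S : V -> Prop) t1 t2 :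
  aff_dim_ge S t1 -> ~ aff_dim_ge S t1.+1 -> aff_dim_ge S t2 -> ~ aff_dim_ge S t2.+1 -> t1 = t2.
Proof.
move=> h1 h2 h3 h4.
have := @has_dim_uniq R m S (Posz t1) (Posz t2) (conj h1 h2) (conj h3 h4).
by case.
Qed.

Lemma face_repr N (M : 'M[R]_(m, N)) F : is_face M F ->
  exists a b, valid M a b /\ (forall x, F x <-> Fc M a b x).
Proof.
case=> a [b [h1 h2]]; exists a, b; split => //.
by move=> j; apply: h1; exact: conv_col.
Qed.

Lemma facet_dim_nat N (M : 'M[R]_(m, N)) F e :
  is_facet M F -> aff_dim_ge F e -> ~ aff_dim_ge F e.+1 -> has_dim (conv M) (Posz e.+1).
Proof.
move=> hf h1 h2; have [e0 [hd [[_ hF]|[e' [he [h3 h4]]]]]] := facet_dims hf.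
  by have [x /hF] := aff_dim_ge0_ex h1.
by rewrite (nat_dim_uniq h1 h2 h3 h4) -he.
Qed.

Lemma nest N (M : 'M[R]_(m, N)) F G :
  is_facet M F -> is_facet M G -> (forall x, G x -> F x) -> forall x, F x -> G x.
Proof.
move=> hF hG hGF x hx.
have [eF [hdF hF']] := facet_dims hF.
have [eG [hdG hG']] := facet_dims hG.
have := has_dim_uniq hdF hdG; case => heq; subst eG.
case: hF' => [[_ hFe]|[e' [he [hF1 hF2]]]]; first by case: (hFe x).
case: hG' => [[he' _]|[e'' [he' [hG1 hG2]]]]; first by move: he; rewrite he'.
move: he'; rewrite he; case => ?; subst e''.
case: hF => [/face_repr [a [b [hva hFi]]] _].
case: hG => [/face_repr [a' [b' [hva' hGi]]] _].
case: hG1 => p [hp hpi].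
have hin : in_aff p x by apply: (dep (S := F)) => // i; apply: hGF.
apply/hGi; split; first by case: (hFi x) => /(_ hx) [].
apply: in_aff_dot hin _ => i; by case: (hGi (p i)) => /(_ (hp i)) [].
Qed.

Lemma conv_sub_face N (M : 'M[R]_(m, N)) (J : {set 'I_N}) c g y :
  (forall j, j \in J -> dot c (col j M) = g) -> conv_sub M J y -> conv M y /\ dot c y = g.
Proof.
move=> hJ [lam [h0 hn h1 hy]]; split.
  by exists lam; split => // i; rewrite in_setT.
rewrite hy dot_conv (eq_bigr (fun j => lam j 0 * g)); first by rewrite -big_distrl /= h1 mul1r.
move=> j _; case: (boolP (j \in J)) => hj; first by rewrite hJ.
by rewrite hn // !mul0r.
Qed.

Lemma conv_sub_col N (M : 'M[R]_(m, N)) (J : {set 'I_N}) j :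
  j \in J -> conv_sub M J (col j M).
Proof.
move=> hj; exists (delta_mx j 0); split.
- by move=> i; rewrite mxE ler0n.
- by move=> i hi; rewrite mxE; case: eqP => // ?; subst i; move: hi; rewrite hj.
- by rewrite (bigD1 j) //= mxE !eqxx big1 ?addr0 // => i /negbTE hi; rewrite mxE hi.
- by rewrite colE.
Qed.

Lemma conv_WH n r (X : 'M[R]_(m, n)) (W : 'M[R]_(m, r)) (H : 'M[R]_(r, n)) :
  (forall i j, 0 <= H i j) -> (forall j, \sum_i H i j = 1) -> X = W *m H ->
  forall x, conv X x -> conv W x.
Proof.
move=> hH hs -> x [lam [h0 _ h1 ->]].
exists (H *m lam); split.
- by move=> i; rewrite mxE; apply: sumr_ge0 => j _; apply: mulr_ge0.
- by move=> i; rewrite in_setT.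
- rewrite (eq_bigr (fun i => \sum_j H i j * lam j 0)); last by move=> i _; rewrite mxE.
  rewrite exchange_big /= -h1; apply: eq_bigr => j _.
  by rewrite -big_distrl /= hs mul1r.
- by rewrite mulmxA.
Qed.

Lemma dim_rank n (X : 'M[R]_(m, n)) e : aff_dim_ge (conv X) e -> (e <= \rank X)%N.
Proof.
case=> p [hp]; rewrite aff_indepE /row_free => /eqP <-.
rewrite -(mxrank_tr X); apply: mxrankS; apply/row_subP => i; rewrite rowK.
case: (hp (lift ord0 i)) => l1 [_ _ _ ->]; case: (hp ord0) => l0 [_ _ _ ->].
by rewrite -mulmxBr trmx_mul submxMl.
Qed.

Lemma in_aff_coef k (Q : 'I_k.+1 -> V) x :
  in_aff Q x -> exists z : 'rV[R]_k, forall l,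
    dot l x - dot l (Q ord0) = \sum_i z 0 i * (dot l (Q (lift ord0 i)) - dot l (Q ord0)).
Proof.
move=> /submxP [z hz]; exists z => l.
rewrite -dotBr -dot_tr hz -mulmxA mxE; apply: eq_bigr => i _.
by rewrite Dm_mul.
Qed.

Lemma coef2 g (p : 'I_g.+1 -> V) xp xm f :
  in_aff (ext (ext p xp) xm) f -> exists z1 z2, forall l beta,
    (forall i, dot l (p i) = beta) ->
    dot l f - beta = z1 * (dot l xp - beta) + z2 * (dot l xm - beta).
Proof.
move=> /in_aff_coef [z hz].
exists (z 0 (widen_ord (leqnSn _) ord_max)), (z 0 ord_max) => l beta hl.
have := hz l; rewrite !ext0 hl => ->.
rewrite big_ord_recr /= ext_lift_max big_ord_recr /= ext_lift ext_lift_max.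
rewrite big1 ?add0r // => i _.
by rewrite ext_lift ext_lift hl subrr mulr0.
Qed.

End Misc.

Section Avoid.
Variable R : realFieldType.
Variable m : nat.
Local Notation V := 'cV[R]_m.

Lemma nonconst N (M : 'M[R]_(m, N)) : aff_dim_ge (conv M) 1 ->
  exists c : V, forall r k, exists j, dot (c + r *: 0) (col j M) != k.
Proof.
case=> p [hp hi]; exists (p (lift ord0 ord0) - p ord0) => r k.
apply: NNPP => hn.
have hall : forall j, dot (p (lift ord0 ord0) - p ord0) (col j M) = k.
  move=> j; apply/eqP; apply: NNPP => hj; apply: hn; exists j.
  by rewrite scaler0 addr0; apply/negP.
set c := p (lift ord0 ord0) - p ord0 in hall.
have h1 := const_conv hall (hp (lift ord0 ord0)).
have h0 := const_conv hall (hp ord0).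
have : dot c c = 0 by rewrite /c dotBr h1 h0 subrr.
rewrite dotE => hs.
have hz : forall i, c i 0 = 0.
  have hnn : forall l, predT l -> 0 <= c l 0 * c l 0 by move=> l _; rewrite -expr2 sqr_ge0.
  move=> i; have := @psumr_eq0P _ _ predT (fun i => c i 0 * c i 0) hnn hs i isT.
  by move/eqP; rewrite mulf_eq0 orbb => /eqP.
have hc0 : c = 0 by apply/matrixP => i j; rewrite (ord1 j) hz mxE.
move: hi; rewrite aff_indepE => hi.
have : (1 : 'M[R]_1) *m Dm p == 0.
  apply/eqP/matrixP => i j; rewrite (ord1 i) mul1mx !mxE.
  have := congr1 (fun v : 'cV[R]_m => v j 0) hc0; rewrite /c !mxE; exact.
by rewrite mulmx_free_eq0 // oner_eq0.
Qed.

Lemma facet_avoid N (M : 'M[R]_(m, N)) D q :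
  aff_dim_ge (conv M) D.+1 -> ~ aff_dim_ge (conv M) D.+2 -> conv M q ->
  exists c g, [/\ valid M c g, dot c q < g & is_facet M (Fc M c g)].
Proof.
move=> hd hnd hq.
have [c hnc] := nonconst (aff_dim_ge_le (isT : (1 <= D.+1)%N) hd).
have [j0 _] := hnc 0 0.
have hv0 : valid M 0 1 by move=> j; rewrite dot0l ler01.
have hj0 : dot 0 (col j0 M) < 1 by rewrite dot0l ltr01.
have htc : forall j, dot 0 (col j M) = 1 -> dot c (col j M) = 0.
  by move=> j; rewrite dot0l => /eqP; rewrite eq_sym oner_eq0.
have [cp [bp [cm [bm [jp [jm [[hvp hvm] _ [_ hjpp hjpm] [_ hjmm hjmp] hqq]]]]]]] :=
  wrap_step hv0 hj0 htc hnc.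
have hq0 : dot 0 q < 1 by rewrite dot0l ltr01.
have fin : forall c1 g1 j1 j2, valid M c1 g1 -> dot c1 (col j1 M) = g1 ->
    dot c1 (col j2 M) < g1 -> dot c1 q <> g1 ->
    exists c g, [/\ valid M c g, dot c q < g & is_facet M (Fc M c g)].
  move=> c1 g1 j1 j2 hv1 hj1 hj2 hqn.
  have hq1 : dot c1 q < g1 by rewrite lt_neqAle (conv_le hv1 hq) andbT; apply/eqP.
  have hd1 : aff_dim_ge (Fc M c1 g1) 0.
    by apply: (aff_dim_ge0 (x := col j1 M)); split => //; exact: conv_col.
  have [c' [g' [hv' _ hq' hf]]] := wrap_iter hd hnd hv1 hj2 hd1 hq hq1.
  by exists c', g'.
case: (hqq _ hq0) => hqn.
  exact: (fin _ _ jp jm hvp hjpp hjmp hqn).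
exact: (fin _ _ jm jp hvm hjmm hjpm hqn).
Qed.

End Avoid.


Unset Implicit Arguments.

Theorem lemma1 (R : realFieldType) (m n r : nat)
    (X : 'M[R]_(m, n)) (W : 'M[R]_(m, r)) (H : 'M[R]_(r, n)) (s : nat) :
  (forall i j, 0 <= X i j) ->
  (forall i j, 0 <= H i j) ->
  X = W *m H ->
  FBC X W H s ->
  forall F : 'cV[R]_m -> Prop, is_facet W F -> is_facet X F.
Proof.
move=> hX hH hXWH [ha [_ hbs] [hds hc] hd] F hF.
have hPW := conv_WH hH hbs hXWH.
have to_W : forall G (J : {set 'I_n}), is_facet X G -> (s <= #|J|)%N ->
    {in J &, injective (fun j => col j X)} -> (forall j, j \in J -> G (col j X)) ->
    is_facet W G.
  move=> G J hG hs hinj hJ; apply: NNPP => hn.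
  by have := hd G hG hn J (conj hinj hJ); rewrite ltnNge hs.
have [a [b [hvW hFi]]] := face_repr hF.1.
have [J [hsJ [hinj hJF] hdJ]] := hc F hF.
have [k hk] : exists k, \rank X = k.+2.
  move: hdJ hds; case: (\rank X) => [|[|k]] hdJ hds; last by exists k.
  - by move: hdJ; rewrite (_ : 0%:Z - 2 = Negz 1).
  - have : (0 < #|J|)%N by apply: leq_trans hsJ; apply: leq_trans hds.
    case/card_gt0P => j hj; move: hdJ; rewrite (_ : 1%:Z - 2 = Negz 0) // => hdJ.
    by case: (hdJ _ (conv_sub_col X hj)).
rewrite hk in hds hdJ; move: hdJ; rewrite (_ : k.+2%:Z - 2 = k%:Z); last first.
  by rewrite -addn2 PoszD addrK.
case=> hJ1 hJ2.
have [j0 hj0] : exists j0, j0 \in J.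
  have : (0 < #|J|)%N by apply: leq_trans hsJ; apply: leq_trans hds.
  by case/card_gt0P => j hj; exists j.
set xq := col j0 X.
have hxqF : F xq by apply: hJF.
have [D [hDW hFd]] := facet_dims hF.
case: hFd => [[_ hFe]|[D' [hD [hF1 hF2]]]]; first by case: (hFe _ hxqF).
subst D.
have hvX : valid X a b by move=> j; apply: conv_le hvW (hPW _ (conv_col X j)).
have hJG : forall j, j \in J -> dot a (col j X) = b.
  by move=> j /hJF /hFi [].
have hGk : aff_dim_ge (Fc X a b) k.
  by apply: aff_dim_ge_set hJ1 => y hy; apply: conv_sub_face hJG hy.
have [e [hP1 hP2]] := dim_exists (aff_dim_ge0 (conv_col X j0)).
have he_le : (e <= k.+2)%N by rewrite -hk; apply: dim_rank hP1.
case: (classic (exists j, dot a (col j X) < b)) => [[j1 hj1]|hnone].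
-
  have [g [hG1 hG2]] := dim_exists (aff_dim_ge_le (leq0n k) hGk).
  have hkg : (k <= g)%N.
    by rewrite leqNgt; apply/negP => hlt; apply: hG2; exact: aff_dim_ge_le hlt hGk.
  have hge : (g < e)%N.
    rewrite ltnNge; apply/negP => h; apply: (proper_bound hvX hj1 hP2).
    exact: aff_dim_ge_le h hG1.
  case: e hP1 hP2 hge he_le => [//|e'] hP1 hP2 hge he_le.
  case: (ltnP g e') => hge'.
  +
    have hgk : g = k by lia.
    have he'k : e' = k.+1 by lia.
    subst g e'.
    have [p [hp hpi]] := hG1.
    have [c [gam [htc hnc]]] := make_c hvX hj1 hP1 (leqnn _) hp hpi hG2.
    have [cp [bp [cm [bm [jp [jm [[hvp hvm] ht [hjpa hjpp hjpm] [hjma hjmm hjmp] _]]]]]]] :=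
      wrap_step hvX hj1 htc hnc.
    have hpa : forall i, dot a (p i) = b by move=> i; case: (hp i).
    have mkF : forall c' b' j' j'', valid X c' b' ->
        (forall j, dot a (col j X) = b -> dot c' (col j X) = b') ->
        dot c' (col j' X) = b' -> dot a (col j' X) < b -> dot c' (col j'' X) < b' ->
        [/\ is_facet X (Fc X c' b'), aff_dim_ge (Fc X c' b') k.+1 &
            ~ aff_dim_ge (Fc X c' b') k.+2].
      move=> c' b' j' j'' hv' ht' hj' hja hj''.
      have h1 : aff_dim_ge (Fc X c' b') k.+1.
        exists (ext p (col j' X)); split.
          apply: ext_in; last by split => //; exact: conv_col.
          move=> i; case: (hp i) => hpc hpe; split => //.
          exact: (face_mono hvX ht').
        apply: aff_ext hpi _; apply: (in_aff_sep hpa) => h.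
        by move: hja; rewrite h ltxx.
      have h2 := proper_bound hv' hj'' hP2.
      split => //; apply: (mk_facet (e := k.+1)) => //; first exact: Fc_face.
    have [hFp hFp1 hFp2] := mkF _ _ jp jm hvp (fun j h => (ht j h).1) hjpp hjpa hjmp.
    have [hFm hFm1 hFm2] := mkF _ _ jm jp hvm (fun j h => (ht j h).2) hjmm hjma hjpm.
    have hJp : forall j, j \in J -> Fc X cp bp (col j X).
      by move=> j hj; split; [exact: conv_col | exact: (ht j (hJG j hj)).1].
    have hJm : forall j, j \in J -> Fc X cm bm (col j X).
      by move=> j hj; split; [exact: conv_col | exact: (ht j (hJG j hj)).2].
    have hWp := to_W _ _ hFp hsJ hinj hJp.
    have hWm := to_W _ _ hFm hsJ hinj hJm.
    have [ap [bp' [hvap hFpi]]] := face_repr hWp.1.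
    have [am [bm' [hvam hFmi]]] := face_repr hWm.1.
    have hW := facet_dim_nat hWp hFp1 hFp2.
    have hDk : D' = k.+1.
      by have := has_dim_uniq hDW hW; case.
    subst D'.
    have hW2 : ~ aff_dim_ge (conv W) k.+3 by case: hW.
    have [f [hfF hfn]] : exists f, F f /\ ~ in_aff p f.
      apply: NNPP => hn.
      case: hF1 => pF [hpF hpFi].
      have hall : forall i, in_aff p (pF i).
        by move=> i; apply: NNPP => hni; apply: hn; exists (pF i).
      by have := aff_bound hall hpFi; rewrite ltnn.
    set xp := col jp X in hjpa hjpp hjpm hJp hFp1 *.
    set xm := col jm X in hjma hjmm hjmp *.
    have hpFp : forall i, Fc X cp bp (p i).
      by move=> i; case: (hp i) => hpc hpe; split => //; exact: (face_mono hvX (fun j h => (ht j h).1)).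
    have hpFm : forall i, Fc X cm bm (p i).
      by move=> i; case: (hp i) => hpc hpe; split => //; exact: (face_mono hvX (fun j h => (ht j h).2)).
    have hpap : forall i, dot ap (p i) = bp' by move=> i; case: (hFpi (p i)) => /(_ (hpFp i)) [].
    have hpam : forall i, dot am (p i) = bm' by move=> i; case: (hFmi (p i)) => /(_ (hpFm i)) [].
    have hxpX : conv X xp by exact: conv_col.
    have hxmX : conv X xm by exact: conv_col.
    have hapxp : dot ap xp = bp' by case: (hFpi xp) => /(_ (conj hxpX hjpp)) [].
    have hamxm : dot am xm = bm' by case: (hFmi xm) => /(_ (conj hxmX hjmm)) [].
    have hapxm : dot ap xm < bp'.
      rewrite lt_neqAle (conv_le hvap (hPW _ hxmX)) andbT; apply/eqP => h.
      case: (hFpi xm) => _ /(_ (conj (hPW _ hxmX) h)) [_ h'].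
      by move: hjmp; rewrite h' ltxx.
    have hamxp : dot am xp < bm'.
      rewrite lt_neqAle (conv_le hvam (hPW _ hxpX)) andbT; apply/eqP => h.
      case: (hFmi xp) => _ /(_ (conj (hPW _ hxpX) h)) [_ h'].
      by move: hjpm; rewrite h' ltxx.
    have hfW : conv W f by case: (hFi f) => /(_ hfF) [].
    have hfa : dot a f = b by case: (hFi f) => /(_ hfF) [].
    have hfG : forall y, Fc X a b y -> in_aff p y.
      by move=> y hy; apply: (dep (S := Fc X a b)).
    have hapf : dot ap f < bp'.
      rewrite lt_neqAle (conv_le hvap hfW) andbT; apply/eqP => h.
      case: (hFpi f) => _ /(_ (conj hfW h)) [hfX _].
      by apply: hfn; apply: hfG.
    have hamf : dot am f < bm'.
      rewrite lt_neqAle (conv_le hvam hfW) andbT; apply/eqP => h.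
      case: (hFmi f) => _ /(_ (conj hfW h)) [hfX _].
      by apply: hfn; apply: hfG.
    have hQ1 : aff_indep (ext p xp).
      by apply: aff_ext hpi _; apply: (in_aff_sep hpam) => h; move: hamxp; rewrite h ltxx.
    have hQ2 : aff_indep (ext (ext p xp) xm).
      apply: aff_ext hQ1 _.
      apply: (in_aff_sep (c := ap) (g := bp')).
        by apply: (ext_in (S := fun y => dot ap y = bp')).
      by move=> h; move: hapxm; rewrite h ltxx.
    have hQc : forall i, conv W (ext (ext p xp) xm i).
      apply: ext_in; last exact: hPW.
      apply: ext_in; last exact: hPW.
      by move=> i; apply: hPW; case: (hp i).
    have hfin := dep hQ2 hQc hW2 hfW.
    have [z1 [z2 hz]] := coef2 hfin.
    have ea := hz a b hpa.
    have ep := hz ap bp' hpap.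
    have em := hz am bm' hpam.
    rewrite hapxp subrr mulr0 add0r in ep.
    rewrite hamxm subrr mulr0 addr0 in em.
    rewrite hfa subrr in ea.
    have hz2 : 0 < z2.
      rewrite ltNge; apply/negP => hz2.
      have : 0 <= z2 * (dot ap xm - bp') by rewrite mulr_le0 // subr_le0 ltW.
      by rewrite -ep subr_ge0 leNgt hapf.
    have hz1 : 0 < z1.
      rewrite ltNge; apply/negP => hz1.
      have : 0 <= z1 * (dot am xp - bm') by rewrite mulr_le0 // subr_le0 ltW.
      by rewrite -em subr_ge0 leNgt hamf.
    have : z1 * (dot a xp - b) + z2 * (dot a xm - b) < 0.
      have hA : dot a xp - b < 0 by rewrite subr_lt0.
      have hB : dot a xm - b < 0 by rewrite subr_lt0.
      nra.
    by rewrite -ea ltxx.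
  +
    have hge'' : g = e' by apply/eqP; rewrite eqn_leq hge'; rewrite -ltnS hge.
    subst g.
    have hGf : is_facet X (Fc X a b).
      apply: (mk_facet (e := e')) => //; first exact: Fc_face.
    have hJG' : forall j, j \in J -> Fc X a b (col j X).
      by move=> j hj; split; [exact: conv_col | exact: hJG].
    have hGW := to_W _ _ hGf hsJ hinj hJG'.
    have hGF : forall x, Fc X a b x -> F x.
      by move=> x [hx hxa]; apply/hFi; split => //; exact: hPW.
    have hnest := nest hF hGW hGF.
    apply: (mk_facet (e := e')).
    * exists a, b; split; first by move=> x hx; exact: conv_le hvX hx.
      by move=> x; split; [exact: hnest | exact: hGF].
    * by split.
    * exact: aff_dim_ge_set hG1.
    * by move=> h; apply: hG2; exact: aff_dim_ge_set h.
-
  have hall : forall j, dot a (col j X) = b.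
    move=> j; have := hvX j; rewrite le_eqVlt => /orP [/eqP //|h].
    by case: hnone; exists j.
  have hPF : forall x, conv X x -> F x.
    by move=> x hx; apply/hFi; split; [exact: hPW | exact: const_conv hall hx].
  have he_lt : (e <= D')%N.
    rewrite leqNgt; apply/negP => h; apply: hF2.
    by apply: aff_dim_ge_le h _; exact: aff_dim_ge_set hP1.
  have hxqW : conv W xq by apply: hPW; exact: conv_col.
  have [c2 [g2 [hv2 hq2 hF'f]]] := facet_avoid hDW.1 hDW.2 hxqW.
  have [J' [hsJ' [hinj' hJF'] hdJ']] := hc _ hF'f.
  move: hdJ'; rewrite hk (_ : k.+2%:Z - 2 = k%:Z); last by rewrite -addn2 PoszD addrK.
  case=> hJ1' _.
  have hvX2 : valid X c2 g2 by move=> j; apply: conv_le hv2 (hPW _ (conv_col X j)).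
  have hJG2 : forall j, j \in J' -> dot c2 (col j X) = g2.
    by move=> j /hJF' [].
  have hG'k : aff_dim_ge (Fc X c2 g2) k.
    by apply: aff_dim_ge_set hJ1' => y hy; apply: conv_sub_face hJG2 hy.
  case: e hP1 hP2 he_lt he_le => [|e''] hP1 hP2 he_lt he_le.
    have hpb := @proper_bound R m n X c2 g2 0 j0 hvX2 hq2 hP2.
    by exfalso; apply: hpb; exact: aff_dim_ge_le (leq0n k) hG'k.
  have [c3 [g3 [hv3 ht3 _ hF3]]] := wrap_iter hP1 hP2 hvX2 hq2 hG'k (conv_col X j0) hq2.
  have hJ3 : forall j, j \in J' -> Fc X c3 g3 (col j X).
    by move=> j hj; split; [exact: conv_col | exact: ht3 (hJG2 j hj)].
  have hW3 := to_W _ _ hF3 hsJ' hinj' hJ3.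
  have [e3 [hd3 hF3d]] := facet_dims hF3.
  have he3 : e''.+1 = e3.
    by have := has_dim_uniq (conj hP1 hP2 : has_dim (conv X) (Posz e''.+1)) hd3; case.
  subst e3.
  case: hF3d => [[//]|[e4 [he4 [h41 h42]]]].
  case: he4 => he4; subst e4.
  have hW3d := facet_dim_nat hW3 h41 h42.
  have := has_dim_uniq hDW hW3d; case => hee; subst D'.
  by move: he_lt; rewrite ltnn.
Qed.
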